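(* Let $\mathcal X=\mathcal X_1\times\cdots\times\mathcal X_b$, $\mathcal X_i=\mathbb R^{m_i\times n_i}$ with trace inner product and arbitrary norms $\|\cdot\|_{(i)}$ (dual norms $\|\cdot\|_{(i)\star}$). Let $f:\mathcal X\to\mathbb R$ be continuously differentiable with $f\ge f^\star$ for some $f^\star\in\mathbb R$. Let $\mathcal D$ be an arbitrary probability distribution on subsets of $[b]$, and assume there are constants $L^0_{i,S}\ge0$ ($S\in\operatorname{supp}(\mathcal D)$), with $L^0_{i,S}=0$ for $i\notin S$, such that for every $S\in\operatorname{supp}(\mathcal D)$, $X\in\mathcal X$ and $\Gamma\in\mathcal X$ with $\Gamma_i=0$ for $i\notin S$, $$f(X+\Gamma)-f(X)-\langle\nabla f(X),\Gamma\rangle\le\sum_{i\in S}\frac{L^0_{i,S}}2\|\Gamma_i\|_{(i)}^2.$$ From $X^0$, for $k=0,1,\dots$ draw $S^k\sim\mathcal D$ i.i.d., set $X_i^{k+1}=X_i^k-\gamma_i^k(\nabla_if(X^k))^\sharp$ for $i\in S^k$ and $X_i^{k+1}=X_i^k$ otherwise, with $\gamma_i^k=1/L^0_{i,S^k}$. Then for every $K\ge1$, $$\frac1K\sum_{k=0}^{K-1}\sum_{i=1}^b\frac{w_i}{\frac1b\sum_{j=1}^bw_j}\mathbb E\big[\|\nabla_if(X^k)\|_{(i)\star}^2\big]\le\frac{f(X^0)-f^\star}{K\left(\frac1b\sum_{j=1}^bw_j\right)},\qquad w_i:=\mathbb E\left[\frac{\mathbb 1\{i\in\hat S\}}{2L^0_{i,\hat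 S}}\right],$$ where $\hat S\sim\mathcal D$.
   Context: $\operatorname{supp}(\mathcal D)$ is the collection of subsets of $[b]$ with positive probability. For $G\in\mathcal X_i$, $G^\sharp$ is an element of $\arg\max_Z\{\langle G,Z\rangle-\frac12\|Z\|_{(i)}^2\}$. In $w_i$ the integrand is understood to be $0$ when $i\notin\hat S$. *)

(* Defs.v *)
From HB Require Import structures.
From mathcomp Require Import all_boot all_order all_algebra.
From mathcomp Require Import boolp classical_sets reals.
Set Implicit Arguments. Unset Strict Implicit. Unset Printing Implicit Defensive.
Import Order.TTheory GRing.Theory Num.Theory.
Local Open Scope ring_scope.
Local Open Scope classical_set_scope.

Definition blocks (R : Type) (b : nat) (m n : 'I_b -> nat) :=
  forall i : 'I_b, 'M[R]_(m i, n i).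

Section Defs.
Variables (R : realType) (b : nat) (m n : 'I_b -> nat).
Local Notation X := (blocks R m n).

Definition mip (p q : nat) (A B : 'M[R]_(p, q)) : R := \tr (A^T *m B).

Definition ipX (x y : X) : R := \sum_(i < b) mip (x i) (y i).

Definition addX (x y : X) : X := fun i => x i + y i.
Definition subX (x y : X) : X := fun i => x i - y i.

Definition euclX (x : X) : R := Num.sqrt (ipX x x).

Definition is_gradient (f : X -> R) (g : X -> X) : Prop :=
  forall x : X, forall eps : R, 0 < eps -> exists2 delta : R, 0 < delta &
    forall h : X, euclX h < delta ->
      `| f (addX x h) - f x - ipX (g x) h | <= eps * euclX h.

Definition continuousX (g : X -> X) : Prop :=
  forall x : X, forall eps : R, 0 < eps -> exists2 delta : R, 0 < delta &
    forall y : X, euclX (subX y x) < delta -> euclX (subX (g y) (g x)) < eps.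

Definition C1_with_gradient (f : X -> R) (g : X -> X) : Prop :=
  is_gradient f g /\ continuousX g.

End Defs.

Definition is_norm (R : realType) (p q : nat) (N : 'M[R]_(p, q) -> R) : Prop :=
  [/\ forall A, 0 <= N A,
      forall A, N A = 0 -> A = 0,
      forall (a : R) A, N (a *: A) = `|a| * N A
    & forall A B, N (A + B) <= N A + N B].

Definition dual_norm (R : realType) (p q : nat) (N : 'M[R]_(p, q) -> R)
  (G : 'M[R]_(p, q)) : R :=
  sup [set mip G Z | Z in [set Z | N Z <= 1]].

Definition is_sharp (R : realType) (p q : nat) (N : 'M[R]_(p, q) -> R)
  (G Gs : 'M[R]_(p, q)) : Prop :=
  forall Z, mip G Z - (N Z) ^+ 2 / 2 <= mip G Gs - (N Gs) ^+ 2 / 2.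

Definition is_distr (R : realType) (b : nat) (P : {set 'I_b} -> R) : Prop :=
  (forall S, 0 <= P S) /\ \sum_(S : {set 'I_b}) P S = 1.

Definition step (R : realType) (b : nat) (m n : 'I_b -> nat)
  (grad : blocks R m n -> blocks R m n)
  (sharp : forall i : 'I_b, 'M[R]_(m i, n i) -> 'M[R]_(m i, n i))
  (L0 : {set 'I_b} -> 'I_b -> R)
  (x : blocks R m n) (S : {set 'I_b}) : blocks R m n :=
  fun i => if i \in S then x i - (L0 S i)^-1 *: sharp i (grad x i) else x i.

Definition iterate (R : realType) (b : nat) (m n : 'I_b -> nat)
  (grad : blocks R m n -> blocks R m n)
  (sharp : forall i : 'I_b, 'M[R]_(m i, n i) -> 'M[R]_(m i, n i))
  (L0 : {set 'I_b} -> 'I_b -> R) (x0 : blocks R m n)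
  (s : seq {set 'I_b}) : blocks R m n :=
  foldl (step grad sharp L0) x0 s.

(* expectation of a function of the first k samples S^0..S^{k-1}, drawn
   i.i.d. from P *)
Definition expect_k (R : realType) (b : nat) (P : {set 'I_b} -> R) (k : nat)
  (phi : seq {set 'I_b} -> R) : R :=
  \sum_(s : k.-tuple {set 'I_b}) (\prod_(S <- s) P S) * phi s.

Definition weight (R : realType) (b : nat) (P : {set 'I_b} -> R)
  (L0 : {set 'I_b} -> 'I_b -> R) (i : 'I_b) : R :=
  \sum_(S : {set 'I_b}) P S * (if i \in S then (2 * L0 S i)^-1 else 0).

(* Main.v *)
Require Import Defs.
From HB Require Import structures.
From mathcomp Require Import all_boot all_order all_algebra.
From mathcomp Require Import boolp classical_sets reals.
From mathcomp Require Import ring lra.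
Import Order.TTheory GRing.Theory Num.Theory.
Local Open Scope ring_scope.
Local Open Scope classical_set_scope.

Lemma mipZ (R : realType) p q (G A : 'M[R]_(p, q)) a :
  mip G (a *: A) = a * mip G A.
Proof. by rewrite /mip -scalemxAr mxtraceZ. Qed.

Lemma mip0 (R : realType) p q (G : 'M[R]_(p, q)) : mip G 0 = 0.
Proof. by rewrite -(scale0r 0) mipZ mul0r. Qed.

Lemma dual_sharp (R : realType) p q (N : 'M[R]_(p, q) -> R) G Gs :
  is_norm N -> is_sharp N G Gs ->
  dual_norm N G ^+ 2 <= 2 * (mip G Gs - N Gs ^+ 2 / 2).
Proof.
move=> [N0 _ NZ _] hs.
set V := mip G Gs - N Gs ^+ 2 / 2.
have N00 : N 0 = 0 by rewrite -(scale0r 0) NZ normr0 mul0r.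
have V0 : 0 <= V by have := hs 0; rewrite mip0 N00 expr0n /= mul0r subr0.
set s := Num.sqrt (2 * V).
have s0 : 0 <= s by apply: sqrtr_ge0.
have ub : ubound [set mip G Z | Z in [set Z | N Z <= 1]] s.
  move=> _ [Z /= HZ <-].
  case: (lerP (mip G Z) 0) => ha; first exact: le_trans ha s0.
  have := hs (mip G Z *: Z); rewrite mipZ NZ -/V => h.
  have h2 : mip G Z ^+ 2 <= 2 * V.
    have := N0 Z => hN.
    have : `|mip G Z| = mip G Z by rewrite gtr0_norm.
    move=> e; rewrite e in h.
    have n1 : N Z ^+ 2 <= 1 by rewrite -(expr1n _ 2); apply: lerXn2r; rewrite ?nnegrE.
    have n2 : mip G Z ^+ 2 * N Z ^+ 2 <= mip G Z ^+ 2 * 1.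
      by apply: ler_wpM2l; rewrite ?sqr_ge0.
    move: h n2; rewrite exprMn; lra.
  rewrite -(gtr0_norm ha) -sqrtr_sqr; exact: ler_wsqrtr.
have ne : [set mip G Z | Z in [set Z | N Z <= 1]] !=set0.
  by exists 0, 0 => //=; rewrite ?N00 ?ler01 ?mip0.
have hsup := ge_sup ne ub.
have hd0 : 0 <= dual_norm N G.
  apply: (ub_le_sup (ex_intro _ s ub)).
  by exists 0 => //=; rewrite ?N00 ?ler01 ?mip0.
have : s ^+ 2 = 2 * V by rewrite sqr_sqrtr // mulr_ge0.
rewrite /dual_norm in hd0 *; nra.
Qed.

Lemma expect0 (R : realType) (b : nat) (P : {set 'I_b} -> R) phi :
  expect_k P 0 phi = phi [::].
Proof.
rewrite /expect_k (big_pred1 [tuple]) ?big_nil ?mul1r //.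
by move=> t; rewrite /= (tuple0 t); apply/esym/eqP.
Qed.

Lemma expect_cons (R : realType) (b : nat) (P : {set 'I_b} -> R) k phi :
  expect_k P k.+1 phi = \sum_S P S * expect_k P k (fun s => phi (S :: s)).
Proof.
rewrite /expect_k (reindex (fun p : {set 'I_b} * k.-tuple {set 'I_b} =>
   [tuple of p.1 :: p.2])) /=.
  rewrite -(pair_big xpredT xpredT (fun S (t : k.-tuple _) =>
     (\prod_(S0 <- S :: t) P S0) * phi (S :: t))) /=.
  apply: eq_bigr => S _; rewrite mulr_sumr; apply: eq_bigr => t _.
  by rewrite big_cons mulrA.
exists (fun t : k.+1.-tuple {set 'I_b} => (thead t, [tuple of behead t])).
  by move=> [S t] _ /=; rewrite theadE; congr pair; apply: val_inj.
by move=> t _ /=; rewrite [in RHS](tuple_eta t); apply: val_inj.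
Qed.

Lemma expect_one (R : realType) (b : nat) (P : {set 'I_b} -> R) k :
  is_distr P -> expect_k P k (fun _ => 1) = 1.
Proof.
move=> [_ hP1]; elim: k => [|k IH]; first by rewrite expect0.
rewrite expect_cons -[RHS]hP1; apply: eq_bigr => S _.
by rewrite IH mulr1.
Qed.
Local Close Scope classical_set_scope.

Theorem theorem5 (R : realType) (b : nat) (hb : (0 < b)%N) (m n : 'I_b -> nat)
  (norm : forall i : 'I_b, 'M[R]_(m i, n i) -> R)
  (hnorm : forall i, is_norm (norm i))
  (f : blocks R m n -> R) (grad : blocks R m n -> blocks R m n)
  (hf : C1_with_gradient f grad)
  (fstar : R) (hfstar : forall x, fstar <= f x)
  (P : {set 'I_b} -> R) (hP : is_distr P)
  (L0 : {set 'I_b} -> 'I_b -> R)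
  (hL0nn : forall S i, 0 < P S -> 0 <= L0 S i)
  (hL0out : forall S i, 0 < P S -> i \notin S -> L0 S i = 0)
  (hsmooth : forall S, 0 < P S -> forall x gam : blocks R m n,
     (forall i, i \notin S -> gam i = 0) ->
     f (addX x gam) - f x - ipX (grad x) gam
       <= \sum_(i in S) L0 S i / 2 * (norm i (gam i)) ^+ 2)
  (sharp : forall i : 'I_b, 'M[R]_(m i, n i) -> 'M[R]_(m i, n i))
  (hsharp : forall i G, is_sharp (norm i) G (sharp i G))
  (x0 : blocks R m n) (K : nat) (hK : (1 <= K)%N) :
  let w := weight P L0 in
  let avg := b%:R^-1 * \sum_(j < b) w j in
  K%:R^-1 * \sum_(k < K) \sum_(i < b)
      (w i / avg) *
      expect_k P k (fun s => (dual_norm (norm i) (grad (iterate grad sharp L0 x0 s) i)) ^+ 2)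
  <= (f x0 - fstar) / (K%:R * avg).
Proof.
cbv zeta.
set w := weight P L0.
set avg := (b%:R^-1 * _).
have [P0 P1] := hP.
have descent : forall S x, 0 < P S ->
   f (step grad sharp L0 x S) + \sum_i (if i \in S then (2 * L0 S i)^-1 else 0)
      * dual_norm (norm i) (grad x i) ^+ 2 <= f x.
  move=> S x hS.
  pose gam : blocks R m n := fun i =>
    if i \in S then (- (L0 S i)^-1) *: sharp i (grad x i) else 0.
  have e : step grad sharp L0 x S = addX x gam.
    apply: functional_extensionality_dep => i; rewrite /step /addX /gam.
    by case: ifP => _; rewrite ?addr0 // scaleNr.
  have hg : forall i, i \notin S -> gam i = 0.
    by move=> i hi; rewrite /gam (negbTE hi).
  have := hsmooth S hS x gam hg.
  rewrite -e /ipX (big_mkcond (fun i => i \in S)) /= => hsm.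
  have hi : \sum_i (mip (grad x i) (gam i) + (if i \in S then L0 S i / 2 * norm i (gam i) ^+ 2 else 0)
      + (if i \in S then (2 * L0 S i)^-1 else 0) * dual_norm (norm i) (grad x i) ^+ 2) <= \sum_(i < b) (0:R).
    apply: ler_sum => i _; rewrite /gam; case: ifP => iS; last first.
      by rewrite mip0 mul0r !addr0.
    have [_ _ NZ _] := hnorm i.
    rewrite mipZ NZ normrN.
    have L0ge := hL0nn S i hS.
    have ds := @dual_sharp R _ _ (norm i) _ _ (hnorm i) (hsharp i (grad x i)).
    have [N0 _ _ _] := hnorm i.
    have Nge := N0 (sharp i (grad x i)).
    move: ds Nge.
    set a := mip _ _; set nn := norm i _; set dd := dual_norm _ _.
    case: (eqVneq (L0 S i) 0) => [->|Lne].
      move=> ds Nge. by rewrite mulr0 invr0 normr0 oppr0 !mul0r !addr0.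
    have Lgt : 0 < L0 S i by rewrite lt_def Lne.
    rewrite invfM ger0_norm ?invr_ge0 //.
    have hc : L0 S i * (L0 S i)^-1 = 1 by rewrite mulfV.
    have c0 : 0 <= (L0 S i)^-1 by rewrite invr_ge0.
    move: hc c0; set c := (L0 S i)^-1 => hc c0 ds Nge.
    have -> : L0 S i / 2 * (c * nn) ^+ 2 = c * nn ^+ 2 / 2.
      by rewrite exprMn expr2 !mulrA (mulrAC (L0 S i)) hc; ring.
    nra.
  rewrite big1_eq !big_split /= in hi.
  lra.
have onestep : forall x, \sum_i w i * dual_norm (norm i) (grad x i) ^+ 2
    + \sum_S P S * f (step grad sharp L0 x S) <= f x.
  move=> x.
  rewrite /w /weight.
  under eq_bigr do rewrite mulr_suml.
  rewrite exchange_big /= -big_split /=.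
  have e1 : f x = \sum_S P S * f x by rewrite -mulr_suml P1 mul1r.
  rewrite [leRHS]e1.
  apply: ler_sum => S _.
  have := P0 S; rewrite le0r => /orP [/eqP PS0|PSgt].
    by rewrite PS0 !mul0r big1 ?add0r // => i _; rewrite !mul0r.
  rewrite -[leLHS](_ : P S * (f (step grad sharp L0 x S) + \sum_i (if i \in S then (2 * L0 S i)^-1 else 0)
      * dual_norm (norm i) (grad x i) ^+ 2) = _).
    by apply: ler_wpM2l => //; apply: descent.
  rewrite mulrDr addrC mulr_sumr.
  apply/eqP; rewrite (inj_eq (addrI _)); apply/eqP; apply: eq_bigr => i _.
  by rewrite [in LHS]mulrA.
have claim : forall K x, \sum_(k < K) \sum_i w i *
      expect_k P k (fun s => dual_norm (norm i) (grad (iterate grad sharp L0 x s) i) ^+ 2)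
    <= f x - expect_k P K (fun s => f (iterate grad sharp L0 x s)).
  elim=> [|k IH] x.
    by rewrite big_ord0 expect0 subrr.
  rewrite big_ord_recl /=.
  under eq_bigr do rewrite expect0.
  under [X in _ + X]eq_bigr do (under eq_bigr do rewrite expect_cons).
  rewrite expect_cons.
  have e : \sum_(i < k) \sum_(i0 < b) w i0 * \sum_S P S *
        expect_k P i (fun s => dual_norm (norm i0) (grad (iterate grad sharp L0 (step grad sharp L0 x S) s) i0) ^+ 2)
     = \sum_S P S * \sum_(i < k) \sum_(i0 < b) w i0 *
        expect_k P i (fun s => dual_norm (norm i0) (grad (iterate grad sharp L0 (step grad sharp L0 x S) s) i0) ^+ 2).
    rewrite [RHS](eq_bigr (fun S => \sum_(i < k) \sum_(i0 < b) P S * (w i0 *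
        expect_k P i (fun s => dual_norm (norm i0) (grad (iterate grad sharp L0 (step grad sharp L0 x S) s) i0) ^+ 2)))); last first.
      by move=> S _; rewrite mulr_sumr; apply: eq_bigr => i _; rewrite mulr_sumr.
    rewrite [RHS]exchange_big; apply: eq_bigr => i _ /=.
    rewrite [RHS]exchange_big; apply: eq_bigr => i0 _ /=.
    rewrite mulr_sumr; apply: eq_bigr => S _; ring.
  rewrite e.
  have h2 : \sum_S P S * \sum_(i < k) \sum_(i0 < b) w i0 *
        expect_k P i (fun s => dual_norm (norm i0) (grad (iterate grad sharp L0 (step grad sharp L0 x S) s) i0) ^+ 2)
     <= \sum_S (P S * f (step grad sharp L0 x S) - P S * expect_k P k (fun s => f (iterate grad sharp L0 (step grad sharp L0 x S) s))).
    by apply: ler_sum => S _; rewrite -mulrBr; apply: ler_wpM2l => //; apply: IH.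
  have := onestep x.
  move: h2.
  rewrite sumrB.
  lra.
have hE : fstar <= expect_k P K (fun s => f (iterate grad sharp L0 x0 s)).
  have e1 := @expect_one R b P K hP.
  suff : fstar * expect_k P K (fun _ => 1) <= expect_k P K (fun s => f (iterate grad sharp L0 x0 s)).
    by rewrite e1 mulr1.
  rewrite /expect_k mulr_sumr.
  apply: ler_sum => t _; rewrite mulr1 mulrC; apply: ler_wpM2l => //.
  by apply: prodr_ge0 => S _.
have hT := claim K x0.
have w0 : forall j, 0 <= w j.
  move=> j; apply: sumr_ge0 => S _.
  case: (eqVneq (P S) 0) => [->|PSne]; first by rewrite mul0r.
  have PSgt : 0 < P S by rewrite lt_def PSne P0.
  apply: mulr_ge0 => //; case: ifP => // _; rewrite invr_ge0 mulr_ge0 //.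
  exact: hL0nn.
have avg0 : 0 <= avg by apply: mulr_ge0; rewrite ?invr_ge0 // sumr_ge0.
have -> : K%:R^-1 * \sum_(k < K) \sum_(i < b) (w i / avg) *
      expect_k P k (fun s => (dual_norm (norm i) (grad (iterate grad sharp L0 x0 s) i)) ^+ 2)
  = (K%:R^-1 * avg^-1) * \sum_(k < K) \sum_(i < b) w i *
      expect_k P k (fun s => (dual_norm (norm i) (grad (iterate grad sharp L0 x0 s) i)) ^+ 2).
  rewrite -mulrA; congr (_ * _); rewrite mulr_sumr; apply: eq_bigr => k _.
  rewrite mulr_sumr; apply: eq_bigr => i _; ring.
rewrite mulrC [in leRHS]invfM; apply: ler_wpM2r; first by rewrite mulr_ge0 ?invr_ge0.
lra.
Qed.
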